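(* Let $G$ be a connected simple graph with $n \geq 2$ vertices $v_1, \ldots, v_n$, and let $x = (x_1, \ldots, x_n)$ be an eigenvector of $L(G)$ corresponding to the eigenvalue $\lambda_2(G)$. Suppose that $x_1 = \max_i x_i$ and $x_2 = \min_i x_i$, and that the graph distance between $v_1$ and $v_2$ in $G$ is at most $2$. Then $\lambda(G) \geq 1$. In particular, every connected simple graph $G$ with $n\ge 2$ vertices and diameter less than $3$ satisfies $\lambda(G) \geq 1$.
   Context: For a simple graph $G$ on $n$ vertices, $L(G) = D(G) - A(G)$ is its Laplacian matrix ($A(G)$ the adjacency matrix, $D(G)$ the diagonal degree matrix), with eigenvalues $0 = \lambda_1(G) \leq \lambda_2(G) \leq \cdots \leq \lambda_n(G)$, and $\lambda(G) := \lambda_2(G)$ (the algebraic connectivity). Coordinate $x_i$ of a vector $x \in \mathbb{R}^n$ corresponds to vertex $v_i$. *)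

(* Defs.v *)
From mathcomp Require Import all_boot all_order all_algebra.
From mathcomp Require Import reals.
Set Implicit Arguments. Unset Strict Implicit. Unset Printing Implicit Defensive.
Import Order.TTheory GRing.Theory Num.Theory.
Local Open Scope ring_scope.

Definition simple_graph (n : nat) (e : rel 'I_n) : Prop :=
  symmetric e /\ irreflexive e.

Definition connected_graph (n : nat) (e : rel 'I_n) : Prop :=
  forall u v : 'I_n, connect e u v.

Definition dist_le (n : nat) (e : rel 'I_n) (k : nat) (u v : 'I_n) : Prop :=
  exists p : seq 'I_n, (size p <= k)%N /\ path e u p /\ last u p = v.

Definition diam_lt3 (n : nat) (e : rel 'I_n) : Prop :=
  forall u v : 'I_n, dist_le e 2 u v.

Definition degree (n : nat) (e : rel 'I_n) (i : 'I_n) : nat := #|[set j | e i j]|.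

Definition laplacian (R : nzRingType) (n : nat) (e : rel 'I_n) : 'M[R]_n :=
  \matrix_(i, j) ((if i == j then (degree e i)%:R else 0) - (if e i j then 1 else 0)).

(* lam is lambda_2 of the square matrix M: listing the eigenvalues
   (roots of the characteristic polynomial, with multiplicity) in
   nondecreasing order lambda_1 <= ... <= lambda_n, lam = lambda_2. *)
Definition is_lambda2 (R : realType) (n : nat) (M : 'M[R]_n) (lam : R) : Prop :=
  exists s : seq R, sorted <=%R s /\
    char_poly M = \prod_(a <- s) ('X - a%:P) /\ lam = nth 0 s 1.

(* Main.v *)
Require Import Defs.
From mathcomp Require Import all_boot all_order all_algebra.
From mathcomp Require Import reals ring lra zify.
Set Implicit Arguments. Unset Strict Implicit. Unset Printing Implicit Defensive.
Import Order.TTheory GRing.Theory Num.Theory.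
Local Open Scope ring_scope.

Section StepA.
Variable R : comNzRingType.
Variable n : nat.

Definition Em : 'M[{poly R}]_n.+1 := \matrix_(i, j) ((i != 0) && (j == 0))%:R.

Definition Tm (M : 'M[{poly R}]_n.+1) : 'M[{poly R}]_n.+1 :=
  \matrix_(i, j) ((if j == 0 then \sum_k M i k else M i j)
     - (i != 0)%:R * (if j == 0 then \sum_k M 0 k else M 0 j)).

Lemma Tm_mul M : Tm M = (1%:M - Em) *m M *m (1%:M + Em).
Proof.
have E1 (N : 'M[{poly R}]_n.+1) : Em *m N = \matrix_(i, j) ((i != 0)%:R * N 0 j).
  apply/matrixP => i j; rewrite !mxE (bigD1 ord0) //= big1 ?addr0.
    by rewrite mxE eqxx andbT.
  by move=> k /negbTE k0; rewrite mxE k0 andbF mul0r.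
have E2 (N : 'M[{poly R}]_n.+1) : N *m Em = \matrix_(i, j) ((j == 0)%:R * \sum_(k | k != 0) N i k).
  apply/matrixP => i j; rewrite !mxE mulr_sumr [RHS]big_mkcond /=; apply: eq_bigr => k _.
  rewrite mxE; case: (k != 0); case: (j == 0) => /=; rewrite ?mulr1 ?mulr0 ?mul1r ?mul0r //.
apply/matrixP => i j.
rewrite mulmxDr mulmx1 mulmxBl mul1mx E1 E2 !mxE.
case: eqP => [->|_]; rewrite ?mul1r ?mul0r ?addr0 //.
rewrite [\sum_k M i k](bigD1 ord0) // [\sum_k M 0 k](bigD1 ord0) //= mulrDr opprD.
rewrite [in RHS](eq_bigr (fun k => M i k - (i != 0)%:R * M 0 k)); last by move=> k _; rewrite !mxE.
rewrite sumrB -mulr_sumr; ring.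
Qed.

Lemma det_Tm M : \det (Tm M) = \det M.
Proof.
have h1 : \det (1%:M - Em) = 1.
  rewrite det_trig ?big1 //.
    by move=> i _; rewrite !mxE eqxx andNb subr0.
  apply/is_trig_mxP => i j ij; rewrite !mxE.
  have -> : (i == j) = false by apply/negbTE; rewrite -val_eqE /= ltn_eqF.
  case: (j =P 0) => [j0|]; rewrite ?andbF ?subr0 //; by move: ij; rewrite j0.
have h2 : \det (1%:M + Em) = 1.
  rewrite det_trig ?big1 //.
    by move=> i _; rewrite !mxE eqxx andNb addr0.
  apply/is_trig_mxP => i j ij; rewrite !mxE.
  have -> : (i == j) = false by apply/negbTE; rewrite -val_eqE /= ltn_eqF.
  case: (j =P 0) => [j0|]; rewrite ?andbF ?addr0 //; by move: ij; rewrite j0.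
by rewrite Tm_mul !det_mulmx h1 h2 mul1r mulr1.
Qed.

Lemma stepA (A : 'M[R]_n.+1) : (forall i, \sum_j A i j = 0) ->
  exists m : {poly R}, char_poly A = 'X * m /\
     char_poly (A + const_mx 1) = ('X - (n.+1)%:R%:P) * m.
Proof.
move=> hA.
set M := char_poly_mx A; set M' := char_poly_mx (A + const_mx 1).
have sX i : \sum_(k < n.+1) ('X : {poly R}) *+ (i == k) = 'X.
  rewrite (bigD1 i) //= big1 ?addr0; first by rewrite eqxx.
  by move=> k /negbTE ki; rewrite eq_sym ki.
have sM i : \sum_k M i k = 'X.
  rewrite /M /char_poly_mx.
  under eq_bigr do rewrite mxE [map_mx _ _ _ _]mxE.
  under eq_bigr do rewrite !mxE.
  by rewrite sumrB sX -(rmorph_sum (@polyC R)) hA subr0.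
have sM' i : \sum_k M' i k = 'X - (n.+1)%:R%:P.
  rewrite /M' /char_poly_mx.
  under eq_bigr do rewrite !mxE.
  rewrite sumrB sX -(rmorph_sum (@polyC R)); congr (_ - _%:P).
  by rewrite big_split /= hA add0r sumr_const card_ord.
have l0 (j : 'I_n) : (lift 0 j == 0) = false by apply/negbTE; rewrite eq_sym neq_lift.
have cof : cofactor (Tm M') 0 0 = cofactor (Tm M) 0 0.
  rewrite /cofactor; congr (_ * \det _); apply/matrixP => i j; rewrite !mxE !l0 /=.
  rewrite !polyCD; ring.
exists (cofactor (Tm M) 0 0); split.
  rewrite /char_poly -/M -det_Tm (expand_det_col _ 0) (bigD1 0) //= big1 ?addr0.
    by rewrite mxE eqxx sM /= mul0r subr0.
  by move=> i /negbTE i0; rewrite mxE eqxx !sM i0 /= mul1r subrr mul0r.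
rewrite /char_poly -/M' -det_Tm (expand_det_col _ 0) (bigD1 0) //= big1 ?addr0.
  by rewrite mxE eqxx sM' /= mul0r subr0 cof.
by move=> i /negbTE i0; rewrite mxE eqxx !sM' i0 /= mul1r subrr mul0r.
Qed.
End StepA.
Lemma exmax (R : realType) n (k : 'I_n) (f : 'I_n -> R) : exists i, forall j, f j <= f i.
Proof. case: (@arg_maxP _ R _ k xpredT f erefl) => i _ H; exists i => j; exact: H. Qed.
Lemma exmin (R : realType) n (k : 'I_n) (f : 'I_n -> R) : exists i, forall j, f i <= f j.
Proof. case: (@arg_minP _ R _ k xpredT f erefl) => i _ H; exists i => j; exact: H. Qed.

Section Graph.
Variable R : realType.
Variable n : nat.
Variable e : rel 'I_n.
Hypothesis hG : simple_graph e.

Lemma degreeE i : ((degree e i)%:R : R) = \sum_(j | e i j) 1.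
Proof. by rewrite /degree sumr_const cardsE. Qed.

Lemma lapE (x : 'cV[R]_n) i :
  (laplacian R e *m x) i 0 = \sum_(j | e i j) (x i 0 - x j 0).
Proof.
rewrite mxE sumrB.
under eq_bigr do rewrite mxE mulrBl.
rewrite sumrB (bigD1 i) //= eqxx big1 ?addr0; last first.
  by move=> j /negbTE ji; rewrite eq_sym ji mul0r.
rewrite sumr_const /degree cardsE mulr_natl; congr (_ - _).
rewrite [RHS]big_mkcond; apply: eq_bigr => j _; case: (e i j); rewrite ?mul1r ?mul0r //.
Qed.

Notation L := (laplacian R e).

Lemma lap_rowsum i : \sum_j L i j = 0.
Proof.
have := lapE (const_mx 1) i; rewrite mxE => h.
rewrite (eq_bigr (fun j => L i j * (const_mx 1 : 'cV[R]_n) j 0)); last by move=> j _; rewrite [const_mx _ _ _]mxE mulr1.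
by rewrite h big1 // => j _; rewrite !mxE subrr.
Qed.

Lemma lap_sym : L^T = L.
Proof.
case: hG => hs _.
apply/matrixP => i j; rewrite !mxE hs; case: (i =P j) => [->|]; by rewrite ?eqxx // eq_sym; move/eqP/negbTE => ->.
Qed.

Lemma lap_max (x : 'cV[R]_n) i : (forall j, x j 0 <= x i 0) ->
  0 <= (L *m x) i 0 /\ forall w, e i w -> x i 0 - x w 0 <= (L *m x) i 0.
Proof.
move=> hi; rewrite lapE; split; first by apply: sumr_ge0 => j _; rewrite subr_ge0.
by move=> w hw; rewrite (bigD1 w) //= lerDl; apply: sumr_ge0 => j _; rewrite subr_ge0.
Qed.

Lemma lap_min (x : 'cV[R]_n) i : (forall j, x i 0 <= x j 0) ->
  (L *m x) i 0 <= 0 /\ forall w, e i w -> (L *m x) i 0 <= x i 0 - x w 0.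
Proof.
move=> hi; have := @lap_max (- x) i.
rewrite mulmxN !mxE => h; case: h.
  by move=> j; rewrite !mxE lerN2.
rewrite oppr_ge0 => -> h; split => // w /h.
by rewrite !mxE -opprD lerN2.
Qed.

Lemma harm_const (x : 'cV[R]_n) : connected_graph e ->
  (forall i, (L *m x) i 0 = 0) -> forall i j, x i 0 = x j 0.
Proof.
move=> hc hx i j.
have [i0 hi0] := exmax i (fun k => x k 0).
have key k w : x k 0 = x i0 0 -> e k w -> x w 0 = x i0 0.
  move=> hk hkw.
  have hm : forall j, x j 0 <= x k 0 by move=> j'; rewrite hk.
  have hs := hx k; rewrite lapE in hs.
  have nn : forall j', e k j' -> 0 <= x k 0 - x j' 0 by move=> j' _; rewrite subr_ge0.
  have := psumr_eq0P nn hs hkw.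
  by rewrite -hk => /eqP; rewrite subr_eq0 => /eqP <-.
have cl : closed e [pred k | x k 0 == x i0 0].
  case: hG => hs _.
  move=> a b hab /=; apply/eqP/eqP => h.
    exact: key h hab.
  by apply: key h _; rewrite hs.
have hi := closed_connect cl (hc i0 i).
have hj := closed_connect cl (hc i0 j).
rewrite inE eqxx in hi hj.
by move/esym/eqP: hi => ->; move/esym/eqP: hj => ->.
Qed.

Lemma eig_ge0 (x : 'cV[R]_n) a : x != 0 -> L *m x = a *: x -> 0 <= a.
Proof.
move=> x0 hx; rewrite leNgt; apply/negP => a0.
have [k hk] : exists k, x k 0 != 0.
  case: (pickP (fun k => x k 0 != 0)) => [k' hk'|h]; first by exists k'.
  case/eqP: x0; apply/matrixP => i j; rewrite ord1 mxE; apply/eqP; exact/negbFE/h.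
have [i hi] := exmax k (fun k => x k 0).
have [m hm] := exmin k (fun k => x k 0).
have [xi0|] := ltrP 0 (x i 0).
  case: (lap_max hi) => + _; rewrite hx mxE => h.
  have : a * x i 0 < 0 by rewrite pmulr_llt0.
  by rewrite ltNge h.
move=> xi0.
have xm0 : x m 0 < 0.
  have xk : x k 0 < 0 by rewrite lt_neqAle hk (le_trans (hi k)).
  exact: le_lt_trans (hm k) xk.
case: (lap_min hm) => + _; rewrite hx mxE => h.
have : 0 < a * x m 0 by rewrite nmulr_rgt0.
by rewrite ltNge h.
Qed.

Lemma cV_nz (x : 'cV[R]_n) : x != 0 -> exists k, x k 0 != 0.
Proof.
move=> x0; case: (pickP (fun k => x k 0 != 0)) => [k' hk'|h]; first by exists k'.
case/eqP: x0; apply/matrixP => i j; rewrite ord1 mxE; apply/eqP; exact/negbFE/h.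
Qed.

Lemma lapJ_det : connected_graph e -> \det (L + const_mx 1) != 0.
Proof.
move=> hc; apply/negP => /det0P [v v0 hv].
set x := v^T.
have x0 : x != 0 by rewrite /x -(inj_eq (@trmx_inj _ _ _)) trmxK trmx0.
have hx : (L + const_mx 1) *m x = 0.
  have sym : (L + const_mx 1)^T = L + const_mx 1 by rewrite linearD /= lap_sym trmx_const.
  by rewrite /x -{1}sym -trmx_mul hv trmx0.
set S := \sum_k x k 0.
have hLx i : (L *m x) i 0 = - S.
  move/matrixP: hx => /(_ i 0); rewrite mulmxDl !mxE => h.
  apply/eqP; rewrite -addr_eq0 -[X in _ + X](_ : \sum_j (const_mx 1 : 'M[R]_n) i j * x j 0 = S).
    by rewrite h.
  by apply: eq_bigr => j _; rewrite mxE mul1r.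
have [k hk] := cV_nz x0.
have [i hi] := exmax k (fun k => x k 0).
have [m hm] := exmin k (fun k => x k 0).
have S0 : S = 0.
  case: (lap_max hi) => + _; case: (lap_min hm) => + _; rewrite !hLx => h1 h2.
  by apply/eqP; rewrite eq_le -oppr_ge0 h2 -oppr_le0 h1.
have hc0 := harm_const hc (fun i => (ltac:(by rewrite hLx S0 oppr0)) : (L *m x) i 0 = 0).
have : S = x k 0 *+ n.
  rewrite /S (eq_bigr (fun=> x k 0)) ?sumr_const ?card_ord // => j _; exact: hc0.
rewrite S0 => /esym /eqP; rewrite mulrn_eq0 (negbTE hk) orbF => /eqP n0.
by have := ltn_ord k; rewrite [X in (_ < X)%N]n0.
Qed.
End Graph.


Lemma arith1 (R : realType) (l a b c : R) : b < a -> a - c <= l * a -> l * b <= b - c -> 1 <= l.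
Proof. move=> h1 h2 h3; nra. Qed.
Lemma arith2 (R : realType) (l a b : R) : b < a -> a - b <= l * a -> l * b <= b - a -> 1 <= l.
Proof. move=> h1 h2 h3; nra. Qed.

Section Main.
Variable R : realType.
Variable n : nat.
Variable e : rel 'I_n.
Hypothesis hG : simple_graph e.
Notation L := (laplacian R e).

Lemma eig_col a : root (char_poly L) a -> exists2 x : 'cV[R]_n, x != 0 & L *m x = a *: x.
Proof.
rewrite -eigenvalue_root_char => /eigenvalueP [v hv v0].
exists v^T; first by rewrite -(inj_eq (@trmx_inj _ _ _)) trmxK trmx0.
by rewrite -{1}(lap_sym R hG) -trmx_mul hv linearZ.
Qed.

Lemma const_eig (x : 'cV[R]_n) lam c : x != 0 -> L *m x = lam *: x ->
  (forall i, x i 0 = c) -> lam = 0.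
Proof.
move=> x0 hx hc; have [k hk] := cV_nz x0.
have := lapE e x k; rewrite hx big1; last by move=> j _; rewrite !hc subrr.
rewrite mxE => /eqP; rewrite mulf_eq0 (negbTE hk) orbF => /eqP //.
Qed.
End Main.

Lemma lam_neq0 (R : realType) n (e : rel 'I_n.+1) (hG : simple_graph e)
  (hc : connected_graph e) lam (hn : (1 <= n)%N)
  (hlam : is_lambda2 (laplacian R e) lam) : lam != 0.
Proof.
case: hlam => s [ss [hp ->]].
have [m [hm hmJ]] := stepA (lap_rowsum R e).
have m0 : m.[0] != 0.
  have := char_poly_det (laplacian R e + const_mx 1).
  rewrite hmJ -horner_coef0 hornerM hornerXsubC.
  move=> h; apply/negP => /eqP m00; move: h; rewrite m00 mulr0 => /esym/eqP.
  rewrite mulf_eq0 signr_eq0 /=; exact/negP/(lapJ_det R hG hc).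
have hs : size s = n.+1.
  have := size_char_poly (laplacian R e); rewrite hp size_prod_XsubC. by case.
case: s hs ss hp => [|a0 [|a1 r]] //=; first by case=> n0 _ _; move: hn; rewrite -n0.
move=> _ /andP [a01 _] hp.
apply/eqP => a10.
have a0ge : 0 <= a0.
  have : root (char_poly (laplacian R e)) a0 by rewrite hp root_prod_XsubC mem_head.
  by case/(eig_col hG) => x x0 hx; exact: (eig_ge0 x0 hx).
have a00 : a0 = 0 by apply/eqP; rewrite eq_le a0ge -a10 a01.
move: hp; rewrite hm !big_cons a00 a10 subr0 => /mulfI.
move/(_ (negbT (polyX_eq0 _))) => mE; move: m0; rewrite mE hornerM hornerX mul0r eqxx.
by [].
Qed.

Unset Implicit Arguments.
Theorem lemma4 (R : realType) (n : nat) (hn : (2 <= n)%N) (e : rel 'I_n)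
  (hG : simple_graph e) (hconn : connected_graph e) (lam : R)
  (hlam : is_lambda2 (laplacian R e) lam) :
  (forall (x : 'cV[R]_n) (v1 v2 : 'I_n),
      x != 0 -> laplacian R e *m x = lam *: x ->
      v1 != v2 ->
      (forall i, x i 0 <= x v1 0) -> (forall i, x v2 0 <= x i 0) ->
      dist_le e 2 v1 v2 ->
      1 <= lam)
  /\ (diam_lt3 e -> 1 <= lam).
Proof.
case: n hn e hG hconn lam hlam => [//|n] hn e hG hconn lam hlam.
have l0 : lam != 0 by apply: (lam_neq0 hG hconn hn hlam).
have hsym : forall a b, e a b -> e b a by case: hG => hs _ a b; rewrite hs.
have P1 : forall (x : 'cV[R]_n.+1) (v1 v2 : 'I_n.+1),
      x != 0 -> laplacian R e *m x = lam *: x ->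
      (forall i, x i 0 <= x v1 0) -> (forall i, x v2 0 <= x i 0) ->
      dist_le e 2 v1 v2 -> 1 <= lam.
  move=> x v1 v2 x0 hx hmax hmin [p [sp [pp lp]]].
  have x12 : x v2 0 < x v1 0.
    rewrite lt_neqAle hmin andbT; apply/negP => /eqP h12.
    have hc : forall i, x i 0 = x v1 0.
      by move=> i; apply/eqP; rewrite eq_le hmax -h12 hmin.
    by move/eqP: l0; apply; apply: (const_eig x0 hx hc).
  have ev i : (laplacian R e *m x) i 0 = lam * x i 0 by rewrite hx mxE.
  case: (lap_max e hmax) => _ hM; case: (lap_min e hmin) => _ hm.
  case: p sp pp lp => [|w [|z [|]]] //=.
  - by move=> _ _ h; move: x12; rewrite h ltxx.
  - move=> _; rewrite andbT => h1 h2; subst w.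
    apply: (arith2 x12); rewrite -!ev; [exact: hM | exact: hm (hsym _ _ h1)].
  - move=> _ /andP [h1] /andP [h2 _] h3; subst z.
    apply: (arith1 x12); rewrite -!ev; [exact: hM h1 | exact: hm (hsym _ _ h2)].
split.
  by move=> x v1 v2 x0 hx _; apply: P1.
move=> hd.
have [x x0 hx] : exists2 x : 'cV[R]_n.+1, x != 0 & laplacian R e *m x = lam *: x.
  apply: eig_col => //; case: hlam => s [_ [hp ->]]; rewrite hp root_prod_XsubC mem_nth //.
  have := size_char_poly (laplacian R e); rewrite hp size_prod_XsubC; case=> ->.
  by [].
have [v1 h1] := exmax ord0 (fun k => x k 0).
have [v2 h2] := exmin ord0 (fun k => x k 0).
exact: P1 x0 hx h1 h2 (hd v1 v2).
Qed.
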